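(* Let $n>1$, $c>0$ and $\rho>0$. Let $(\mathfrak{l},g_\rho^c)$ be the metric Lie algebra described in the context. Then $(\mathfrak{l},g_\rho^c)$ is not a solvsoliton: there are no $\lambda\in\mathbb{R}$ and derivation $D$ of $\mathfrak{l}$ such that the Ricci endomorphism of the left-invariant metric defined by $g_\rho^c$ on the simply connected Lie group with Lie algebra $\mathfrak{l}$ equals $\lambda\,\mathrm{Id}+D$.
   Context: Fix $n\ge 2$, $\rho>0$, $c\ge 0$. The real Lie algebra $\mathfrak{l}$ has basis $B_a^R,B_a^I$ ($a=1,\dots,n-1$), $e_k,f_k$ ($k=0,\dots,n-1$), $Z$. Its brackets are as follows (all brackets of basis elements not listed, up to antisymmetry, are zero). On $\mathfrak{b}=\mathrm{span}\{B_a^R,B_a^I\}$: $[B_1^R,B_1^I]=2B_1^I$, and for $a\in\{2,\dots,n-1\}$: $[B_1^R,B_a^R]=B_a^R$, $[B_1^R,B_a^I]=B_a^I$, $[B_a^R,B_a^I]=\tfrac12 B_1^I$. On $\mathfrak{heis}_{2n+1}=\mathrm{span}\{e_k,f_k,Z\}$: $[e_0,f_0]=Z$, $[e_a,f_a]=-Z$ for $a\ge 1$. Also $[\mathfrak{b},Z]=0$. The mixed brackets are described after complex-bilinear extension, with $E_k:=e_k-if_k$ and $[B,\bar E_k]=\overline{[B,E_k]}$ for $B\in\mathfrak{b}$ real: for $k=0,\dots,n-1$ and $a\in\{2,\dots,n-1\}$, $[B_1^R,E_k]=-\delta_{k0}E_1-\delta_{k1}E_0$, $[B_a^R,E_k]=-\tfrac12(\delta_{k0}+\delta_{k1})E_a-\tfrac12\delta_{ka}(E_0-E_1)$,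 $[B_1^I,E_k]=-i(\delta_{k0}+\delta_{k1})(E_0-E_1)$, $[B_a^I,E_k]=\tfrac{i}{2}(\delta_{k0}+\delta_{k1})E_a-\tfrac{i}{2}\delta_{ka}(E_0-E_1)$. The inner product $g_\rho^c$ on $\mathfrak{l}$ is given by $g(B_1^R,B_1^R)=\frac{\rho+c}{\rho}$, $g(B_1^I,B_1^I)=\frac{(\rho+c)^3}{\rho^2(\rho+2c)}$, $g(B_a^R,B_a^R)=g(B_a^I,B_a^I)=\frac{\rho+c}{4\rho}$ ($a\ge2$), $g(e_0,e_0)=g(f_0,f_0)=\frac{\rho+2c}{4\rho^2}$, $g(e_a,e_a)=g(f_a,f_a)=\frac{1}{4\rho}$ ($a\ge1$), $g(Z,Z)=\frac{\rho+c}{4\rho^2(\rho+2c)}$, $g(B_1^I,Z)=-\frac{c(\rho+c)}{2\rho^2(\rho+2c)}$, and all other pairs of distinct basis vectors orthogonal. This is the left-invariant metric on the group $L$ with Lie algebra $\mathfrak{l}$ corresponding to the metric induced on the level sets (orbits of a cohomogeneity one action) of the one-loop deformation with parameter $c$ of the quaternionic Kähler symmetric space $\mathrm{SU}(n,2)/\mathrm{S}(\mathrm{U}(n)\times\mathrm{U}(2))$. A left-invariant metric on a simply connected solvable Lie group is a solvsoliton if $\mathrm{ric}=\lambda\mathrm{Id}+D$ with $\lambda\in\mathbb{R}$ and $D$ a derivation of the Lie algebra. *)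

(* Defs.v *)
From mathcomp Require Import all_boot all_order all_algebra.
Set Implicit Arguments. Unset Strict Implicit. Unset Printing Implicit Defensive.
Import Order.TTheory GRing.Theory Num.Theory.
Local Open Scope ring_scope.

(* The metric Lie algebra (l, g_rho^c) of dimension 4n-1.
   Basis labels:
     inl (inl a)        = B^R_{a+1}   (a : 'I_n.-1, paper index a+1 in 1..n-1)
     inl (inr a)        = B^I_{a+1}
     inr (inl (inl k))  = e_k         (k : 'I_n)
     inr (inl (inr k))  = f_k
     inr (inr tt)       = Z                                                  *)
Definition lidx (n : nat) :=
  (('I_n.-1 + 'I_n.-1) + (('I_n + 'I_n) + unit))%type.

Section LieAlg.
Variable R : realFieldType.
Variable n : nat.

Definition lvec := lidx n -> R.

Definition kd (x y : nat) : R := (x == y)%:R.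

Definition evBR (m : nat) : lvec := fun s =>
  match s with inl (inl a) => kd (val a).+1 m | _ => 0 end.
Definition evBI (m : nat) : lvec := fun s =>
  match s with inl (inr a) => kd (val a).+1 m | _ => 0 end.
Definition evZ : lvec := fun s =>
  match s with inr (inr _) => 1 | _ => 0 end.
Definition ev (t : lidx n) : lvec := fun s => (s == t)%:R.

(* Complex coefficient (real part, imaginary part) of E_j in [B, E_k],
   B = B^R_pa (isI = false) or B^I_pa (isI = true), pa in 1..n-1,
   where E_k = e_k - i f_k. *)
Definition cB (isI : bool) (pa k j : nat) : R * R :=
  if ~~ isI then
    if pa == 1%N then (- (kd k 0 * kd j 1) - kd k 1 * kd j 0, 0)
    else (- (1/2) * (kd k 0 + kd k 1) * kd j pa
          - (1/2) * kd k pa * (kd j 0 - kd j 1), 0)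
  else
    if pa == 1%N then (0, - ((kd k 0 + kd k 1) * (kd j 0 - kd j 1)))
    else (0, (1/2) * (kd k 0 + kd k 1) * kd j pa
             - (1/2) * kd k pa * (kd j 0 - kd j 1)).

(* If [B,E_k] = sum_j (al_j + i be_j) E_j, then (B real)
   [B,e_k] = sum_j (al_j e_j + be_j f_j),  [B,f_k] = sum_j (-be_j e_j + al_j f_j). *)
Definition mixE (isI : bool) (pa k : nat) : lvec := fun s =>
  match s with
  | inr (inl (inl j)) => (cB isI pa k (val j)).1
  | inr (inl (inr j)) => (cB isI pa k (val j)).2
  | _ => 0 end.
Definition mixF (isI : bool) (pa k : nat) : lvec := fun s =>
  match s with
  | inr (inl (inl j)) => - (cB isI pa k (val j)).2
  | inr (inl (inr j)) => (cB isI pa k (val j)).1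
  | _ => 0 end.

(* The listed brackets [x_i, x_j] (each unordered pair listed at most once). *)
Definition lhalf (i j : lidx n) : lvec :=
  match i, j with
  | inl (inl a), inl (inl b) =>
      if ((val a).+1 == 1%N) && ((val b).+1 != 1%N) then evBR (val b).+1
      else fun _ => 0
  | inl (inl a), inl (inr b) =>
      if ((val a).+1 == 1%N) && ((val b).+1 == 1%N) then fun s => 2 * evBI 1 s
      else if ((val a).+1 == 1%N) then evBI (val b).+1
      else if (val b == val a) then fun s => (1/2) * evBI 1 s
      else fun _ => 0
  | inl (inl a), inr (inl (inl k)) => mixE false (val a).+1 (val k)
  | inl (inl a), inr (inl (inr k)) => mixF false (val a).+1 (val k)
  | inl (inr a), inr (inl (inl k)) => mixE true (val a).+1 (val k)
  | inl (inr a), inr (inl (inr k)) => mixF true (val a).+1 (val k)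
  | inr (inl (inl k)), inr (inl (inr l)) =>
      if val k == val l then
        (if val k == 0%N then evZ else fun s => - evZ s)
      else fun _ => 0
  | _, _ => fun _ => 0
  end.

Definition lbrb (i j : lidx n) : lvec := fun s => lhalf i j s - lhalf j i s.

Definition lbr (x y : lvec) : lvec := fun s =>
  \sum_(i : lidx n) \sum_(j : lidx n) x i * y j * lbrb i j s.

Variables rho c : R.

Definition gb (i j : lidx n) : R :=
  match i, j with
  | inl (inl a), inl (inl b) =>
      if val a == val b then
        (if val a == 0%N then (rho + c) / rho else (rho + c) / (4 * rho))
      else 0
  | inl (inr a), inl (inr b) =>
      if val a == val b then
        (if val a == 0%N then (rho + c) ^+ 3 / (rho ^+ 2 * (rho + 2 * c))
         else (rho + c) / (4 * rho))
      else 0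
  | inr (inl (inl k)), inr (inl (inl l))
  | inr (inl (inr k)), inr (inl (inr l)) =>
      if val k == val l then
        (if val k == 0%N then (rho + 2 * c) / (4 * rho ^+ 2) else 1 / (4 * rho))
      else 0
  | inr (inr _), inr (inr _) => (rho + c) / (4 * rho ^+ 2 * (rho + 2 * c))
  | inl (inr a), inr (inr _)
  | inr (inr _), inl (inr a) =>
      if val a == 0%N then - (c * (rho + c)) / (2 * rho ^+ 2 * (rho + 2 * c))
      else 0
  | _, _ => 0
  end.

Definition gm (x y : lvec) : R :=
  \sum_(i : lidx n) \sum_(j : lidx n) x i * y j * gb i j.

(* A left-invariant connection, given by Gam i j = nabla_{x_i} x_j. *)
Definition nab (Gam : lidx n -> lidx n -> lvec) (x y : lvec) : lvec := fun s =>
  \sum_(i : lidx n) \sum_(j : lidx n) x i * y j * Gam i j s.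

(* Levi-Civita: torsion free and metric (on left-invariant vector fields). *)
Definition levi_civita (Gam : lidx n -> lidx n -> lvec) : Prop :=
  (forall x y s, nab Gam x y s - nab Gam y x s = lbr x y s) /\
  (forall x y z, gm (nab Gam x y) z + gm y (nab Gam x z) = 0).

Definition curv Gam (x y z : lvec) : lvec := fun s =>
  nab Gam x (nab Gam y z) s - nab Gam y (nab Gam x z) s - nab Gam (lbr x y) z s.

Definition ricci Gam (y z : lvec) : R :=
  \sum_(i : lidx n) curv Gam (ev i) y z i.

(* linear endomorphisms of l, as matrices D j i (coefficient of x_j in D x_i) *)
Definition lapp (D : lidx n -> lidx n -> R) (x : lvec) : lvec := fun j =>
  \sum_(i : lidx n) D j i * x i.

Definition is_derivation (D : lidx n -> lidx n -> R) : Prop :=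
  forall x y s, lapp D (lbr x y) s = lbr (lapp D x) y s + lbr x (lapp D y) s.

(* Solvsoliton: Ric = lambda Id + D with D a derivation, where the Ricci
   endomorphism Ric is defined by g(Ric X, Y) = ric(X, Y). *)
Definition is_solvsoliton (Gam : lidx n -> lidx n -> lvec) : Prop :=
  exists (lam : R) (D : lidx n -> lidx n -> R),
    is_derivation D /\
    forall x y, ricci Gam x y = gm (fun s => lam * x s + lapp D x s) y.

End LieAlg.

(* Main.v *)
Require Import Defs.
From mathcomp Require Import all_boot all_order all_algebra.
From mathcomp Require Import ring lra zify.
Import Order.TTheory GRing.Theory Num.Theory.
Local Open Scope ring_scope.

Section W.
Variable R : realFieldType.
Variable m : nat.
Local Notation n := m.+2.
Variables rho c : R.

Definition iBR (a : 'I_m.+1) : lidx n := inl (inl a).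
Definition iBI (a : 'I_m.+1) : lidx n := inl (inr a).
Definition ie (k : 'I_m.+2) : lidx n := inr (inl (inl k)).
Definition iF (k : 'I_m.+2) : lidx n := inr (inl (inr k)).
Definition iZ : lidx n := inr (inr tt).

Lemma sum_unit (F : unit -> R) : \sum_(i : unit) F i = F tt.
Proof. by rewrite (bigD1 tt) //= big1 ?addr0 // => -[]. Qed.

Lemma sum_lidx (F : lidx n -> R) : \sum_i F i =
  \sum_a F (iBR a) + \sum_a F (iBI a) + \sum_k F (ie k) + \sum_k F (iF k) + F iZ.
Proof. by rewrite !big_sumType /= sum_unit !addrA. Qed.

Lemma ev_sumr (t : lidx n) (F : lidx n -> R) : \sum_i ev R t i * F i = F t.
Proof.
rewrite (bigD1 t) //= /ev eqxx mul1r [X in _ + X]big1 ?addr0 // => i /negbTE ->.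
by rewrite mul0r.
Qed.

Lemma ev_suml (t : lidx n) (F : lidx n -> R) : \sum_i F i * ev R t i = F t.
Proof. by rewrite -[RHS](ev_sumr t); apply: eq_bigr => i _; rewrite mulrC. Qed.

Lemma lbr_evl (i : lidx n) (y : lvec R n) s :
  lbr (ev R i) y s = \sum_j y j * lbrb R i j s.
Proof.
rewrite /lbr (bigD1 i) //= [X in _ + X]big1 ?addr0.
  by apply: eq_bigr => j _; rewrite /ev eqxx mul1r.
by move=> i' /negbTE H; apply: big1 => j _; rewrite /ev H !mul0r.
Qed.

Lemma lbr_evr (x : lvec R n) (j : lidx n) s :
  lbr x (ev R j) s = \sum_i x i * lbrb R i j s.
Proof.
rewrite /lbr; apply: eq_bigr => i _.
rewrite (bigD1 j) //= [X in _ + X]big1 ?addr0 /ev ?eqxx ?mulr1 //.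
by move=> j' /negbTE H; rewrite H mulr0 mul0r.
Qed.

Lemma lbr_ev (i j : lidx n) s : lbr (ev R i) (ev R j) s = lbrb R i j s.
Proof. by rewrite lbr_evl ev_sumr. Qed.

Lemma nab_evl G (i : lidx n) (y : lvec R n) s :
  nab G (ev R i) y s = \sum_j y j * G i j s.
Proof.
rewrite /nab (bigD1 i) //= [X in _ + X]big1 ?addr0.
  by apply: eq_bigr => j _; rewrite /ev eqxx mul1r.
by move=> i' /negbTE H; apply: big1 => j _; rewrite /ev H !mul0r.
Qed.

Lemma nab_evr G (x : lvec R n) (j : lidx n) s :
  nab G x (ev R j) s = \sum_i x i * G i j s.
Proof.
rewrite /nab; apply: eq_bigr => i _.
rewrite (bigD1 j) //= [X in _ + X]big1 ?addr0 /ev ?eqxx ?mulr1 //.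
by move=> j' /negbTE H; rewrite H mulr0 mul0r.
Qed.

Lemma nab_ev G (i j : lidx n) s : nab G (ev R i) (ev R j) s = G i j s.
Proof. by rewrite nab_evl ev_sumr. Qed.

Lemma gm_evr (v : lvec R n) k : gm rho c v (ev R k) = \sum_t v t * gb rho c t k.
Proof.
rewrite /gm; apply: eq_bigr => t _.
rewrite (bigD1 k) //= [X in _ + X]big1 ?addr0 /ev ?eqxx ?mulr1 //.
by move=> j' /negbTE H; rewrite H mulr0 mul0r.
Qed.

Ltac splitall := repeat (match goal with
   | |- context [ (?x == ?y) ] => lazymatch type of x with nat => idtac end;
         let E := fresh "E" in
         case E: (x == y)%N; move/eqP: E => E; try (exfalso; lia); rewrite /=
   end).

Lemma gb_sym (i j : lidx n) : gb rho c i j = gb rho c j i.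
Proof.
case: i => [[a|a]|[[a|a]|[]]]; case: j => [[b|b]|[[b|b]|[]]] //=; splitall; by [].
Qed.

Lemma gm_sym (x y : lvec R n) : gm rho c x y = gm rho c y x.
Proof.
rewrite /gm exchange_big. apply: eq_bigr => i _. apply: eq_bigr => j _.
rewrite (gb_sym j i). ring.
Qed.


Lemma sum_only (I : finType) (F : I -> R) a :
  (forall b, b != a -> F b = 0) -> \sum_b F b = F a.
Proof. move=> H; rewrite (bigD1 a) // big1 /= ?addr0 // => b Hb; exact: H. Qed.

Lemma sum_only2 (I : finType) (F : I -> R) a a' : a != a' ->
  (forall b, b != a -> b != a' -> F b = 0) -> \sum_b F b = F a + F a'.
Proof.
move=> Ha H; rewrite (bigD1 a) // (bigD1 a') /= 1?eq_sym // big1 ?addr0 ?addrA //.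
by move=> b /andP [] ? ?; apply: H.
Qed.

Lemma ord_neq p (a b : 'I_p) : a != b -> (a : nat) <> b.
Proof. by move=> /eqP H E; apply: H; apply: ord_inj. Qed.

Ltac neqs := repeat match goal with
  | H : is_true (?a != ?b) |- _ => move/ord_neq: H => /= H
  end.

Definition gdx (v : lvec R n) (k : lidx n) : R :=
  match k with
  | inl (inr a) => v k * gb rho c k k +
       (if val a == 0%N then v iZ * gb rho c iZ k else 0)
  | inr (inr _) => v iZ * gb rho c iZ iZ + v (iBI ord0) * gb rho c (iBI ord0) iZ
  | _ => v k * gb rho c k k
  end.

Lemma gm_gdx v k : gm rho c v (ev R k) = gdx v k.
Proof.
rewrite gm_evr.
case: k => [[a|a]|[[a|a]|[]]].
- rewrite (@sum_only _ _ (inl (inl a))) // => -[[b|b]|[[b|b]|[]]] //= H;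
  neqs; splitall; ring.
- case E: (val a == 0%N).
  + rewrite (@sum_only2 _ _ (inl (inr a)) iZ) //= ?E.
      by rewrite addrC.
    move/eqP: E => /= E.
    move=> -[[b|b]|[[b|b]|[]]] //= H1 H2; neqs; splitall; try ring.
  + rewrite (@sum_only _ _ (inl (inr a))) /= ?E ?addr0 // => -[[b|b]|[[b|b]|[]]] //= H;
    move/negbT/eqP: E => /= E;
    neqs; splitall; ring.
- rewrite (@sum_only _ _ (inr (inl (inl a)))) // => -[[b|b]|[[b|b]|[]]] //= H;
  neqs; splitall; ring.
- rewrite (@sum_only _ _ (inr (inl (inr a)))) // => -[[b|b]|[[b|b]|[]]] //= H;
  neqs; splitall; ring.
- rewrite (@sum_only2 _ _ iZ (iBI ord0)) //= => -[[b|b]|[[b|b]|[]]] //= H1 H2;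
  neqs; splitall; ring.
Qed.

Hypothesis hr : 0 < rho.
Hypothesis hc : 0 <= c.

Lemma r0 : rho != 0. Proof. by rewrite gt_eqF. Qed.
Lemma rc0 : rho + c != 0. Proof. by rewrite gt_eqF // ltr_wpDr. Qed.
Lemma r2c0 : rho + 2 * c != 0.
Proof. by rewrite gt_eqF // ltr_wpDr // mulr_ge0. Qed.

Ltac fld := field; rewrite ?r0 ?rc0 ?r2c0 ?pnatr_eq0 ?andbT //.

Definition gBB := gb rho c (iBI ord0) (iBI ord0).
Definition gZZ := gb rho c iZ iZ.
Definition gBZ := gb rho c (iBI ord0) iZ.
Definition det := gBB * gZZ - gBZ ^+ 2.

Lemma det_eq : det = (rho + c) ^+ 2 / (4 * rho ^+ 3 * (rho + 2 * c)).
Proof.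
by rewrite /det /gBB /gZZ /gBZ /=; fld.
Qed.

Lemma det0 : det != 0.
Proof.
rewrite det_eq mulf_neq0 ?invr_eq0 ?mulf_neq0 ?expf_neq0 ?r0 ?rc0 ?r2c0 //.
by rewrite pnatr_eq0.
Qed.

Lemma gss0 (s : lidx n) : gb rho c s s != 0.
Proof.
have h4 : (4 : R) != 0 by rewrite pnatr_eq0.
case: s => [[a|a]|[[a|a]|[]]] /=; splitall;
 rewrite ?mulf_neq0 ?invr_eq0 ?mulf_neq0 ?expf_neq0 ?r0 ?rc0 ?r2c0 ?oner_eq0 //.
Qed.

Definition sol (w : lidx n -> R) (s : lidx n) : R :=
  match s with
  | inl (inr a) => if val a == 0%N then (w s * gZZ - w iZ * gBZ) / det
                   else w s / gb rho c s s
  | inr (inr _) => (w iZ * gBB - w (iBI ord0) * gBZ) / det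
  | _ => w s / gb rho c s s
  end.

Lemma sol_gdx v s : sol (gdx v) s = v s.
Proof.
case: s => [[a|a]|[[a|a]|[]]]; cbn [sol gdx]; try by rewrite mulfK ?gss0.
- case: eqP => E; last by rewrite addr0 mulfK ?gss0.
  have -> : a = ord0 by apply: ord_inj.
  rewrite [X in X / det](_ : _ = v (iBI ord0) * det) ?mulfK ?det0 //.
  rewrite /det /gBB /gZZ /gBZ /=; ring.
- rewrite [X in X / det](_ : _ = v iZ * det) ?mulfK ?det0 //.
  rewrite /det /gBB /gZZ /gBZ /= ?(gb_sym iZ); ring.
Qed.

Lemma gdx_sol w k : gdx (sol w) k = w k.
Proof.
case: k => [[a|a]|[[a|a]|[]]]; cbn [sol gdx]; try by rewrite divfK ?gss0.
- case: eqP => E; last by rewrite addr0 divfK ?gss0.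
  have -> : a = ord0 by apply: ord_inj.
  rewrite (gb_sym iZ) -/gBZ -/gBB; cbn [sol iZ iBI].
  have d0 := det0; rewrite /det in d0 *.
  field; exact: d0.
- cbn [sol iZ iBI]; rewrite -/gZZ -/gBZ.
  have d0 := det0; rewrite /det in d0 *.
  change (w (inr (inr tt))) with (w iZ).
  rewrite (_ : (\val (@ord0 m) == 0%N) = true) //.
  field; exact: d0.
Qed.

Lemma gdx_ext (a b : lvec R n) k : (forall s, a s = b s) -> gdx a k = gdx b k.
Proof. by move=> H; case: k => [[x|x]|[[x|x]|[]]] /=; rewrite !H. Qed.

Lemma gdxB (a b : lvec R n) k : gdx (fun s => a s - b s) k = gdx a k - gdx b k.
Proof. by case: k => [[x|x]|[[x|x]|[]]] /=; splitall; ring. Qed.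

Lemma gdxN (a : lvec R n) k : gdx (fun s => - a s) k = - gdx a k.
Proof. by case: k => [[x|x]|[[x|x]|[]]] /=; splitall; ring. Qed.

Lemma lbrb_anti (i j s : lidx n) : lbrb R j i s = - lbrb R i j s.
Proof. by rewrite /lbrb opprB. Qed.

Lemma gdx_anti (i j k : lidx n) : gdx (lbrb R j i) k = - gdx (lbrb R i j) k.
Proof. by rewrite -gdxN; apply: gdx_ext => s; rewrite lbrb_anti. Qed.

Lemma sol_ext (a b : lidx n -> R) s : (forall k, a k = b k) -> sol a s = sol b s.
Proof. by move=> H; case: s => [[x|x]|[[x|x]|[]]] /=; rewrite !H. Qed.

Lemma solB (a b : lidx n -> R) s : sol (fun k => a k - b k) s = sol a s - sol b s.
Proof. by case: s => [[x|x]|[[x|x]|[]]] /=; splitall; ring. Qed.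

Definition Kz (i j k : lidx n) : R :=
  (gdx (lbrb R i j) k - gdx (lbrb R j k) i + gdx (lbrb R k i) j) / 2.

Definition G0 (i j : lidx n) : lvec R n := sol (Kz i j).

Lemma LC_G0 Gam : levi_civita rho c Gam -> forall i j s, Gam i j s = G0 i j s.
Proof.
case=> HT HM.
have T i j s : Gam i j s - Gam j i s = lbrb R i j s.
  by have := HT (ev R i) (ev R j) s; rewrite !nab_ev lbr_ev.
have M i j k : gdx (Gam i j) k + gdx (Gam i k) j = 0.
  have := HM (ev R i) (ev R j) (ev R k).
  rewrite (gm_sym (ev R j)) !gm_gdx.
  by rewrite (gdx_ext _ _ _ (nab_ev Gam i j)) (gdx_ext _ _ _ (nab_ev Gam i k)).
have T' i j k : gdx (Gam i j) k - gdx (Gam j i) k = gdx (lbrb R i j) k.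
  by rewrite -gdxB; apply: gdx_ext => s; rewrite T.
have P i j k : gdx (Gam i j) k = Kz i j k.
  rewrite /Kz -T' -T' -T'.
  have := M i j k; have := M j k i; have := M k i j.
  move=> h1 h2 h3. rewrite -[LHS](@mulfK _ 2) ?pnatr_eq0 //.
  congr (_ / 2). lra.
move=> i j s.
by rewrite -(sol_gdx (Gam i j) s) /G0; apply: sol_ext.
Qed.

Lemma Kz_anti i j k : Kz i j k + Kz i k j = 0.
Proof.
rewrite /Kz (gdx_anti k j i) (gdx_anti j i k) (gdx_anti i k j). ring.
Qed.

Lemma G0_tor i j s : G0 i j s - G0 j i s = lbrb R i j s.
Proof.
rewrite /G0 -solB -(sol_gdx (lbrb R i j) s); apply: sol_ext => k.
rewrite /Kz (gdx_anti i j k) (gdx_anti j k i) (gdx_anti k i j)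
  (gdx_anti i k j). fld.
Qed.

Lemma gm_expand (v z : lvec R n) : gm rho c v z = \sum_t z t * gdx v t.
Proof.
rewrite /gm exchange_big; apply: eq_bigr => t _.
rewrite -gm_gdx gm_evr big_distrr; apply: eq_bigr => s _ /=; ring.
Qed.

Lemma gdx_sum (I : finType) (a : I -> R) (F : I -> lvec R n) t :
  gdx (fun s => \sum_i a i * F i s) t = \sum_i a i * gdx (F i) t.
Proof.
case: t => [[x|x]|[[x|x]|[]]]; cbn [gdx].
all: try by rewrite big_distrl; apply: eq_bigr => i _ /=; ring.
- case: ifP => _.
    rewrite !big_distrl -big_split; apply: eq_bigr => i _ /=; ring.
  rewrite addr0 big_distrl; apply: eq_bigr => i _ /=; ring.
- rewrite !big_distrl -big_split; apply: eq_bigr => i _ /=; ring.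
Qed.

Lemma nab_alt G (x y : lvec R n) s :
  nab G x y s = \sum_i x i * (\sum_j y j * G i j s).
Proof.
rewrite /nab; apply: eq_bigr => i _; rewrite big_distrr.
by apply: eq_bigr => j _ /=; ring.
Qed.

Lemma gdx_nab G (x y : lvec R n) t :
  gdx (nab G x y) t = \sum_i \sum_j x i * y j * gdx (G i j) t.
Proof.
rewrite (gdx_ext _ _ _ (nab_alt G x y)) gdx_sum; apply: eq_bigr => i _.
rewrite gdx_sum big_distrr; apply: eq_bigr => j _ /=; ring.
Qed.

Lemma G0_LC : levi_civita rho c G0.
Proof.
split.
- move=> x y s; rewrite /nab /lbr [X in _ - X]exchange_big -sumrB.
  apply: eq_bigr => i _; rewrite -sumrB; apply: eq_bigr => j _.
  rewrite -G0_tor /=; ring.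
- move=> x y z; rewrite (gm_sym y) !gm_expand.
  under eq_bigr do rewrite gdx_nab big_distrr.
  under [X in _ + X]eq_bigr do rewrite gdx_nab big_distrr.
  rewrite /=.
  under eq_bigr do under eq_bigr do rewrite big_distrr.
  under [X in _ + X]eq_bigr do under eq_bigr do rewrite big_distrr.
  rewrite exchange_big [X in _ + X]exchange_big /=.
  under [X in X + _]eq_bigr do rewrite exchange_big.
  rewrite -big_split big1 // => i _; rewrite -big_split big1 // => j _.
  rewrite -big_split big1 // => t _ /=.
  rewrite /G0 !gdx_sol.
  have h := Kz_anti i j t.
  rewrite (_ : Kz i t j = - Kz i j t); last by lra.
  ring.
Qed.


Definition Fx (x i j : lidx n) : R :=
  G0 x x j * G0 i j i - G0 i x j * G0 x j i - lbrb R i x j * G0 j x i.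

Ltac killc := match goal with
  | H : (?a == ?a) = false |- _ => by rewrite eqxx in H
  | H : (?a == ?b) = false |- _ => by rewrite eq_sym eqxx in H
  end.

Ltac splitn := rewrite ?eqSS ?eqxx; repeat (match goal with
   | |- context [ (?x == ?y) ] => lazymatch type of x with nat => idtac end;
         let E := fresh "E" in
         case E: (x == y)%N; [move/eqP: E => E; subst; try killc | try killc]; rewrite /= ?eqSS ?eqxx
   end).

Ltac unf := cbv beta iota delta [Fx G0 sol Kz gdx lbrb lhalf mixE mixF cB evBR evBI evZ kd
  iZ iBI iBR ie iF gBB gZZ gBZ]; simpl.

Ltac crunch := unf; splitn; rewrite ?det_eq; fld.

Definition cA := (c - rho) / (4 * rho ^+ 2).
Definition cB0 := (rho + c) / (4 * rho ^+ 2).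
Definition cC := - (3 * (rho + c)) / (4 * (rho + 2 * c) ^+ 2).
Definition cD := (rho + c) / (4 * (rho + 2 * c) ^+ 2).

Definition Tab0 (i j : lidx n) : R :=
  match i, j with
  | inl (inl a), inr (inl (inl k)) => if (k == a.+1 :> nat) then cA else 0
  | inl (inr a), inr (inl (inr k)) => if (k == a.+1 :> nat) then cA else 0
  | inr (inl (inl k)), inl (inl b) => if (k != 0 :> nat) && (b == k.-1 :> nat) then cB0 else 0
  | inr (inl (inr k)), inl (inr b) => if (k != 0 :> nat) && (b == k.-1 :> nat) then cB0 else 0
  | inr (inl (inr k)), inr (inr _) => if (k == 0 :> nat) then cC else 0
  | inr (inr _), inr (inl (inr k)) => if (k == 0 :> nat) then cD else 0
  | _, _ => 0
  end.

Ltac dord := repeat match goal with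
  | a : ordinal _ |- _ => destruct a as [[|[|a]] ?]
  end.

Ltac crunchT := cbv beta iota delta [Tab0 cA cB0 cC cD Fx G0 sol Kz gdx lbrb lhalf mixE mixF cB
  evBR evBI evZ kd iZ iBI iBR ie iF gBB gZZ gBZ]; simpl; splitn; rewrite ?det_eq; fld.

Definition k1 : 'I_m.+2 := @Ordinal m.+2 1 isT.

Definition cP := - (rho + 3 * c) / (4 * rho * (rho + 2 * c)).
Definition cQ := (rho + c) / (4 * rho * (rho + 2 * c)).
Definition cU := - (3 * (rho + c)) / (4 * rho * (rho + 2 * c)).

Definition Tab1 (i j : lidx n) : R :=
  match i, j with
  | inl (inl a), inr (inl (inl k)) => if (a == 0 :> nat) && (k == 0 :> nat) then cP else 0
  | inl (inr a), inr (inl (inr k)) => if (a == 0 :> nat) && (k == 0 :> nat) then cP else 0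
  | inr (inl (inl k)), inl (inl b) => if (k == 0 :> nat) && (b == 0 :> nat) then cQ else 0
  | inr (inl (inr k)), inl (inr b) => if (k == 0 :> nat) && (b == 0 :> nat) then cQ else 0
  | inr (inl (inr k)), inr (inr _) => if (k == 1 :> nat) then cU else 0
  | inr (inr _), inr (inl (inr k)) => if (k == 1 :> nat) then cQ else 0
  | _, _ => 0
  end.

Ltac crunchT1 := cbv beta iota delta [Tab1 cP cQ cU k1 Fx G0 sol Kz gdx lbrb lhalf mixE mixF cB
  evBR evBI evZ kd iZ iBI iBR ie iF gBB gZZ gBZ]; simpl; splitn; rewrite ?det_eq; fld.

Lemma F0_tab i j : Fx (ie ord0) i j = Tab0 i j.
Proof.
case: i => [[a|a]|[[a|a]|[]]]; case: j => [[b|b]|[[b|b]|[]]]; dord.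
Time all: crunchT.
Qed.

Lemma F1_tab i j : Fx (ie k1) i j = Tab1 i j.
Proof.
case: i => [[a|a]|[[a|a]|[]]]; case: j => [[b|b]|[[b|b]|[]]]; dord.
Time all: crunchT1.
Qed.


Lemma sum_if (p : nat) (P : bool) (t : nat) (V : R) :
  \sum_(b < p) (if P && (b == t :> nat) then V else 0) = if P && (t < p)%N then V else 0.
Proof.
case: P => /=; last by rewrite big1_eq.
case: (ltnP t p) => Ht.
  rewrite (@sum_only _ _ (Ordinal Ht)) /= ?eqxx // => b Hb.
  rewrite ifF //; apply/negbTE; move: Hb; apply: contra => /eqP Hbt.
  by apply/eqP/ord_inj.
apply: big1 => b _; rewrite ifF //; apply/negbTE.
by rewrite neq_ltn (leq_trans (ltn_ord b) Ht).
Qed.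

Lemma sum_if1 (p : nat) (t : nat) (V : R) :
  \sum_(b < p) (if (b == t :> nat) then V else 0) = if (t < p)%N then V else 0.
Proof. exact: (sum_if p true t V). Qed.

Lemma sum_nz (p : nat) (V : R) :
  \sum_(k < p.+1) (if (k != 0 :> nat) then V else 0) = V *+ p.
Proof.
rewrite big_ord_recl /= (eq_bigr (fun _ => V)) ?sumr_const ?card_ord ?add0r //.
Qed.

Lemma predlt (k : 'I_m.+2) : (k.-1 < m.+1)%N.
Proof. by case: k => [[|k] Hk]. Qed.

Lemma ltS_ord (a : 'I_m.+1) : (a.+1 < m.+2)%N.
Proof. exact: ltn_ord a. Qed.

Ltac rowt := rewrite sum_lidx /= ?big1_eq ?sum_unit /= ?add0r ?addr0 ?sum_if ?sum_if1 ?predlt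
  ?andbT ?ltS_ord ?ltn_ord //=.

Lemma row0_BR a : \sum_j Tab0 (iBR a) j = cA.
Proof. by rowt. Qed.
Lemma row0_BI a : \sum_j Tab0 (iBI a) j = cA.
Proof. by rowt. Qed.
Lemma row0_e k : \sum_j Tab0 (ie k) j = if (k != 0 :> nat) then cB0 else 0.
Proof. by rowt. Qed.
Lemma row0_f k : \sum_j Tab0 (iF k) j =
  (if (k != 0 :> nat) then cB0 else 0) + (if (k == 0 :> nat) then cC else 0).
Proof. by rowt. Qed.
Lemma row0_Z : \sum_j Tab0 iZ j = cD.
Proof. by rowt. Qed.

Lemma row1_BR a : \sum_j Tab1 (iBR a) j = if (a == 0 :> nat) then cP else 0.
Proof. by rowt. Qed.
Lemma row1_BI a : \sum_j Tab1 (iBI a) j = if (a == 0 :> nat) then cP else 0.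
Proof. by rowt. Qed.
Lemma row1_e k : \sum_j Tab1 (ie k) j = if (k == 0 :> nat) then cQ else 0.
Proof. by rowt. Qed.
Lemma row1_f k : \sum_j Tab1 (iF k) j =
  (if (k == 0 :> nat) then cQ else 0) + (if (k == 1 :> nat) then cU else 0).
Proof. by rowt. Qed.
Lemma row1_Z : \sum_j Tab1 iZ j = cQ.
Proof. by rowt. Qed.

Lemma tot0 : \sum_i \sum_j Tab0 i j = (cA + cA + cB0 + cB0) *+ m.+1 + cC + cD.
Proof.
rewrite sum_lidx (eq_bigr _ (fun a _ => row0_BR a)) (eq_bigr _ (fun a _ => row0_BI a))
  (eq_bigr _ (fun a _ => row0_e a)) (eq_bigr _ (fun a _ => row0_f a)) row0_Z.
rewrite big_split /= !sumr_const !card_ord sum_nz sum_if1 /=.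
rewrite !mulrnDl; ring.
Qed.

Lemma tot1 : \sum_i \sum_j Tab1 i j = cP + cP + cQ + cQ + cU + cQ.
Proof.
rewrite sum_lidx (eq_bigr _ (fun a _ => row1_BR a)) (eq_bigr _ (fun a _ => row1_BI a))
  (eq_bigr _ (fun a _ => row1_e a)) (eq_bigr _ (fun a _ => row1_f a)) row1_Z.
rewrite big_split /= !sum_if1 /=; ring.
Qed.


Lemma ricci_ev G (x y : lidx n) : ricci G (ev R x) (ev R y) =
  \sum_i \sum_j (G x y j * G i j i - G i y j * G x j i - lbrb R i x j * G j y i).
Proof.
rewrite /ricci; apply: eq_bigr => i _; rewrite /curv !nab_evl nab_evr -!sumrB.
by apply: eq_bigr => j _; rewrite !nab_ev lbr_ev.
Qed.

Lemma ricci_LC Gam (x : lidx n) : levi_civita rho c Gam ->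
  ricci Gam (ev R x) (ev R x) = \sum_i \sum_j Fx x i j.
Proof.
move=> H; rewrite ricci_ev; apply: eq_bigr => i _; apply: eq_bigr => j _.
by rewrite /Fx !(LC_G0 Gam H).
Qed.

Ltac crl := cbv beta iota delta [ev lbrb lhalf mixE mixF cB evBR evBI evZ kd iZ iBI iBR ie iF k1];
  simpl; splitn; rewrite ?eqxx /=; try ring.

Lemma br1 i : lbrb R (iBR ord0) (ie ord0) i = - ev R (ie k1) i.
Proof. case: i => [[b|b]|[[b|b]|[]]]; dord; crl. Qed.
Lemma br2 i : lbrb R i (ie ord0) (ie k1) = - ev R (iBR ord0) i.
Proof. case: i => [[b|b]|[[b|b]|[]]]; dord; crl. Qed.
Lemma br3 i : lbrb R (iBR ord0) i (ie k1) = - ev R (ie ord0) i.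
Proof. case: i => [[b|b]|[[b|b]|[]]]; dord; crl. Qed.
Lemma br4 i : lbrb R (iBR ord0) (ie k1) i = - ev R (ie ord0) i.
Proof. case: i => [[b|b]|[[b|b]|[]]]; dord; crl. Qed.
Lemma br5 i : lbrb R i (ie k1) (ie ord0) = - ev R (iBR ord0) i.
Proof. case: i => [[b|b]|[[b|b]|[]]]; dord; crl. Qed.
Lemma br6 i : lbrb R (iBR ord0) i (ie ord0) = - ev R (ie k1) i.
Proof. case: i => [[b|b]|[[b|b]|[]]]; dord; crl. Qed.


Lemma gdx_ie (v : lvec R n) k : gdx v (ie k) = v (ie k) * gb rho c (ie k) (ie k).
Proof. by []. Qed.

Lemma no_soliton (Gam : lidx n -> lidx n -> lvec R n) : 0 < c -> levi_civita rho c Gam -> ~ is_solvsoliton rho c Gam.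
Proof.
move=> hc' HLC [lam [D [HD Hric]]].
have lev t s : lapp D (ev R t) s = D s t by rewrite /lapp ev_suml.
have sev (F : lidx n -> R) t : \sum_i F i * (- ev R t i) = - F t.
  by rewrite -(ev_suml t F) -sumrN; apply: eq_bigr => u _; rewrite mulrN.
have L1 : lapp D (lbr (ev R (iBR ord0)) (ev R (ie ord0))) (ie k1) = - D (ie k1) (ie k1).
  by rewrite /lapp -sev; apply: eq_bigr => u _; rewrite lbr_ev br1.
have L2 : lbr (lapp D (ev R (iBR ord0))) (ev R (ie ord0)) (ie k1) = - D (iBR ord0) (iBR ord0).
  by rewrite lbr_evr -(sev (fun u => D u (iBR ord0))); apply: eq_bigr => u _; rewrite lev br2.
have L3 : lbr (ev R (iBR ord0)) (lapp D (ev R (ie ord0))) (ie k1) = - D (ie ord0) (ie ord0).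
  by rewrite lbr_evl -(sev (fun u => D u (ie ord0))); apply: eq_bigr => u _; rewrite lev br3.
have L4 : lapp D (lbr (ev R (iBR ord0)) (ev R (ie k1))) (ie ord0) = - D (ie ord0) (ie ord0).
  by rewrite /lapp -sev; apply: eq_bigr => u _; rewrite lbr_ev br4.
have L5 : lbr (lapp D (ev R (iBR ord0))) (ev R (ie k1)) (ie ord0) = - D (iBR ord0) (iBR ord0).
  by rewrite lbr_evr -(sev (fun u => D u (iBR ord0))); apply: eq_bigr => u _; rewrite lev br5.
have L6 : lbr (ev R (iBR ord0)) (lapp D (ev R (ie k1))) (ie ord0) = - D (ie k1) (ie k1).
  by rewrite lbr_evl -(sev (fun u => D u (ie k1))); apply: eq_bigr => u _; rewrite lev br6.
have d1 := HD (ev R (iBR ord0)) (ev R (ie ord0)) (ie k1).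
have d2 := HD (ev R (iBR ord0)) (ev R (ie k1)) (ie ord0).
rewrite L1 L2 L3 in d1; rewrite L4 L5 L6 in d2.
have dE : D (ie ord0) (ie ord0) = D (ie k1) (ie k1) by lra.
have r0 := Hric (ev R (ie ord0)) (ev R (ie ord0)).
have r1 := Hric (ev R (ie k1)) (ev R (ie k1)).
rewrite ricci_LC // in r0; rewrite ricci_LC // in r1.
rewrite (eq_bigr _ (fun i _ => eq_bigr _ (fun j _ => F0_tab i j))) tot0 in r0.
rewrite (eq_bigr _ (fun i _ => eq_bigr _ (fun j _ => F1_tab i j))) tot1 in r1.
rewrite gm_gdx gdx_ie lev /ev eqxx in r0.
rewrite gm_gdx gdx_ie lev /ev eqxx in r1.
rewrite -dE in r1.
move: r0 r1; rewrite /= -mulr_natr.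
set d := D _ _; set M := (m.+1)%:R.
move=> r0 r1.
have e1 : lam * 1 + d = (cP + cP + cQ + cQ + cU + cQ) * (4 * rho).
  by rewrite r1; fld.
rewrite e1 in r0.
have M0 : 0 <= M by rewrite /M ler0n.
have Hd : (cA + cA + cB0 + cB0) * M + cC + cD -
   (cP + cP + cQ + cQ + cU + cQ) * (4 * rho) * ((rho + 2 * c) / (4 * rho ^+ 2)) =
   (2 * M * c * (rho + 2 * c) ^+ 2 + 6 * rho ^+ 2 * c + 16 * rho * c ^+ 2 + 12 * c ^+ 3)
   / (2 * rho ^+ 2 * (rho + 2 * c) ^+ 2).
  rewrite /cA /cB0 /cC /cD /cP /cQ /cU; fld.
have pos : 0 < (2 * M * c * (rho + 2 * c) ^+ 2 + 6 * rho ^+ 2 * c + 16 * rho * c ^+ 2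
   + 12 * c ^+ 3) / (2 * rho ^+ 2 * (rho + 2 * c) ^+ 2).
  have h2c : 0 < rho + 2 * c by rewrite ltr_wpDr // mulr_ge0 // ltW.
  apply: divr_gt0; last by rewrite !mulr_gt0 // exprn_gt0.
  rewrite -!addrA ltr_wpDl ?mulr_ge0 ?ltW ?exprn_ge0 ?ltW //.
  by rewrite !addr_gt0 ?mulr_gt0 ?exprn_gt0.
move: pos; rewrite -Hd r0 subrr ltxx.
done.
Qed.

End W.

Theorem theorem4p13 (R : realFieldType) (n : nat) (rho c : R) :
  (1 < n)%N -> 0 < rho -> 0 < c ->
  (exists Gam : lidx n -> lidx n -> lvec R n, levi_civita rho c Gam) /\
  (forall Gam : lidx n -> lidx n -> lvec R n,
     levi_civita rho c Gam -> ~ is_solvsoliton rho c Gam).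
Proof.
case: n => [|[|m]] // _ hr hc.
split.
- exists (@G0 R m rho c); exact: (@G0_LC R m rho c hr (ltW hc)).
- move=> Gam; exact: (@no_soliton R m rho c hr (ltW hc) Gam hc).
Qed.
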